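(* Fix $k\ge2$ and let $\delta:[n]\times[k]\to[n]$ be a uniformly random $k$-map. The probability that $\delta$ has a sink state or a sink pair is $O(n^{-k+1})$ as $n\to\infty$ (with implied constant at most $1+\frac{(k+1)^{2k}}{2(k-1)!}$).
   Context: $\delta_\alpha(i):=\delta(i,\alpha)$. A state $i$ is a sink state if $\delta_\alpha(i)=i$ for all $\alpha\in[k]$. Two distinct states $\{i,j\}$ form a sink pair if the set $N_{ij}=\{i,j,\delta_1(i),\delta_1(j),\dots,\delta_k(i),\delta_k(j)\}$ has cardinality at most $k+1$. *)

(* Defs.v *)
From HB Require Import structures.
From mathcomp Require Import all_boot all_order all_algebra.
Set Implicit Arguments. Unset Strict Implicit. Unset Printing Implicit Defensive.
Import Order.TTheory GRing.Theory Num.Theory.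

(* A k-map on n states: delta : [n] x [k] -> [n]; states [n] = 'I_n,
   letters [k] = 'I_k (0-based indexing). *)
Definition kmap (n k : nat) := {ffun 'I_n * 'I_k -> 'I_n}.

Definition sink_state n k (d : kmap n k) (i : 'I_n) : bool :=
  [forall a : 'I_k, d (i, a) == i].

Definition Nset n k (d : kmap n k) (i j : 'I_n) : {set 'I_n} :=
  [set i; j] :|: [set d (i, a) | a : 'I_k] :|: [set d (j, a) | a : 'I_k].

Definition sink_pair n k (d : kmap n k) (i j : 'I_n) : bool :=
  (i != j) && (#|Nset d i j| <= k.+1)%N.

Definition has_sink n k (d : kmap n k) : bool :=
  [exists i, sink_state d i] || [exists i, exists j, sink_pair d i j].

Definition bad_count n k : nat := #|[set d : kmap n k | has_sink d]|.

(* Main.v *)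
Require Import Defs.
From HB Require Import structures.
From mathcomp Require Import all_boot all_order all_algebra.
From mathcomp Require Import zify ring.
Import Order.TTheory GRing.Theory Num.Theory.

Lemma foldr_prod (aT : finType) (g : aT -> nat) :
  foldr muln 1 [seq g x | x : aT] = \prod_x g x.
Proof. by rewrite unlock /reducebig /image_mem /index_enum enumT; elim: (Finite.enum aT) => //= a l ->. Qed.

Definition Fam n k (I S : {set 'I_n}) : {set kmap n k} :=
  [set d : kmap n k | [forall x, (x.1 \in I) ==> (d x \in S)]].

Arguments Fam {n} k I S.
Lemma card_Fam n k (I S : {set 'I_n}) :
  #|Fam k I S| * n ^ #|[set x : 'I_n * 'I_k | x.1 \in I]| =
  #|S| ^ #|[set x : 'I_n * 'I_k | x.1 \in I]| * n ^ (n * k).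
Proof.
pose F := fun x : 'I_n * 'I_k => if x.1 \in I then mem S else mem [set: 'I_n].
have -> : #|Fam k I S| = #|(family F : simpl_pred (kmap n k))|.
  apply: eq_card => d; rewrite inE; apply/forallP/familyP => H x.
    by rewrite /F; case: ifP => h; [have := H x; rewrite h | rewrite inE].
  by have := H x; rewrite /F; case: ifP => //= _ ->.
rewrite card_family foldr_prod (bigID (fun x => x.1 \in I)) /=.
rewrite (eq_bigr (fun _ => #|S|)); last by move=> x h; rewrite /F h.
rewrite [X in _ * X * _](eq_bigr (fun _ => n)); last first.
  by move=> x /negbTE h; rewrite /F h cardsT card_ord.
rewrite !prod_nat_const -mulnA -expnD.
have ha : #|(fun x : 'I_n * 'I_k => x.1 \in I)| = #|[set x : 'I_n * 'I_k | x.1 \in I]|.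
  by apply: eq_card => x; rewrite inE.
have hb : #|(fun x : 'I_n * 'I_k => x.1 \notin I)| + #|[set x : 'I_n * 'I_k | x.1 \in I]| = n * k.
  rewrite -ha addnC.
  rewrite -[n in RHS]card_ord -[k in RHS]card_ord -card_prod -[X in _ = X](cardC (fun x : 'I_n * 'I_k => x.1 \in I)).
  by congr (_ + _); apply: eq_card.
by rewrite ha hb mulnC.
Qed.

Lemma card_setX1 n k (I : {set 'I_n}) :
  #|[set x : 'I_n * 'I_k | x.1 \in I]| = #|I| * k.
Proof.
have -> : [set x : 'I_n * 'I_k | x.1 \in I] = setX I [set: 'I_k].
  by apply/setP => x; rewrite !inE andbT.
by rewrite cardsX cardsT card_ord.
Qed.

Lemma card_bigcup_le (I T : finType) (P : pred I) (A : I -> {set T}) :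
  #|\bigcup_(i | P i) A i| <= \sum_(i | P i) #|A i|.
Proof.
apply: (big_ind2 (fun (U : {set T}) (s : nat) => is_true (#|U| <= s))) => //; first by rewrite cards0.
by move=> U1 s1 U2 s2 h1 h2; apply: leq_trans (leq_card_setU U1 U2).1 (leq_add h1 h2).
Qed.

Lemma extend_set {T : finType} {U : {set T}} {m} :
  #|U| <= m -> m <= #|T| -> exists S : {set T}, (U \subset S) && (#|S| == m).
Proof.
move=> hU hm; move: U hU.
elim: m hm => [|m IH] hm U hU.
  by exists U; rewrite subxx /=; move: hU; rewrite leqn0.
have [h|h] : #|U| < m.+1 \/ #|U| = m.+1 by lia.
  have [S /andP[s1 /eqP s2]] := IH (ltnW hm) U h.
  have : 0 < #|~: S| by have := cardsC S; lia.
  case/card_gt0P => x; rewrite inE => hx.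
  exists (x |: S); rewrite cardsU1 hx s2 eqxx andbT.
  by apply: subset_trans s1 _; exact: subsetUr.
by exists U; rewrite subxx h /=.
Qed.

Lemma pairs_card n :
  2 * #|[set p : 'I_n * 'I_n | p.1 < p.2]| <= n * n.
Proof.
set L := [set p : 'I_n * 'I_n | p.1 < p.2].
set R := [set p : 'I_n * 'I_n | p.2 < p.1].
have hR : #|R| = #|L|.
  have -> : R = [set (p.2, p.1) | p in L].
    apply/setP => p; rewrite inE; apply/idP/imsetP => [h | [q hq ->]].
      by exists (p.2, p.1); rewrite ?inE //; case: p {h}.
    by move: hq; rewrite inE.
  by apply: card_imset => [[a b] [c d]] [-> ->].
have hI : L :&: R = set0.
  apply/setP => p; rewrite !inE; apply/negP => /andP[h1 h2].
  by have := ltn_trans h1 h2; rewrite ltnn.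
have := cardsU L R; rewrite hI cards0 subn0 => hU.
have := max_card (L :|: R); rewrite card_prod card_ord.
move=> h; lia.
Qed.

Lemma ffact_le n m : n ^_ m <= n ^ m.
Proof.
elim: m n => [|m IH] n //; rewrite ffactnS expnS leq_mul2l.
apply/orP; right; apply: leq_trans (IH _) _; case: (m) => // m0; rewrite leq_exp2r //; lia.
Qed.

Lemma Nset_sym n k (d : kmap n k) i j : Nset d i j = Nset d j i.
Proof.
apply/setP => x; rewrite /Nset !inE.
by case: (x == i); case: (x == j); rewrite /= ?orbT //= orbC.
Qed.

Lemma pair_in n k (d : kmap n k) (i j : 'I_n) :
  (k.-1 <= n)%N -> i < j -> #|Nset d i j| <= k.+1 ->
  exists S : {set 'I_n}, (#|S| == k.-1) && (d \in Fam k [set i; j] (i |: (j |: S))).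
Proof.
move=> hkn hij hN.
have hij' : i != j by rewrite neq_ltn hij.
set U := Nset d i j :\: [set i; j].
have hsub : [set i; j] \subset Nset d i j.
  by rewrite /Nset -setUA subsetUl.
have hU : #|U| <= k.-1.
  rewrite /U cardsD (setIidPr hsub) cards2 hij'; lia.
have hkn' : k.-1 <= #|'I_n| by rewrite card_ord.
have [S /andP[s1 s2]] := extend_set hU hkn'.
exists S; rewrite s2 /=; rewrite inE; apply/forallP => -[x a] /=; apply/implyP => hx.
have hdx : d (x, a) \in Nset d i j.
  move: hx; rewrite !inE => /orP[] /eqP ->.
    by apply/orP; left; apply/orP; right; apply/imsetP; exists a.
  by apply/orP; right; apply/imsetP; exists a.
case hij2 : (d (x, a) \in [set i; j]).
  by move: hij2; rewrite !inE => /orP[] ->; rewrite ?orbT.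
have : d (x, a) \in U by rewrite /U inE hij2 hdx.
by move/(subsetP s1) => h; rewrite !inE h !orbT.
Qed.

Lemma sum_const_pred (I : finType) (P : pred I) c :
  \sum_(i | P i) c = #|[set i | P i]| * c.
Proof. by rewrite -sum_nat_const; apply: eq_bigl => i; rewrite inE. Qed.

Lemma main_nat k n : (2 <= k)%N -> (k.+1 <= n)%N ->
  bad_count n k * n ^ k.-1 * (2 * (k.-1)`!) <=
  (2 * (k.-1)`! + (k.+1) ^ (2 * k)) * n ^ (n * k).
Proof.
move=> hk hn.
have hkn : k.-1 <= n by lia.
set M := n ^ (n * k); set c := (k.+1) ^ (2 * k); set f := (k.-1)`!.
set Abig := \bigcup_(i : 'I_n) Fam k [set i] [set i].
set Bbig := \bigcup_(p : 'I_n * 'I_n | p.1 < p.2)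
   \bigcup_(S : {set 'I_n} | #|S| == k.-1) Fam k [set p.1; p.2] (p.1 |: (p.2 |: S)).
have hincl : [set d : kmap n k | has_sink d] \subset Abig :|: Bbig.
  apply/subsetP => d; rewrite inE => /orP[/existsP[i hi] | /existsP[i /existsP[j /andP[hij hN]]]].
    rewrite inE; apply/orP; left; apply/bigcupP; exists i => //.
    rewrite inE; apply/forallP => -[x a] /=; apply/implyP; rewrite !inE => /eqP ->.
    exact: (forallP hi a).
  have key : forall i j : 'I_n, i < j -> #|Nset d i j| <= k.+1 -> d \in Bbig.
    move=> i' j' h1 h2; have [S /andP[hS hd]] := pair_in _ _ d _ _ hkn h1 h2.
    by apply/bigcupP; exists (i', j') => //; apply/bigcupP; exists S.
  rewrite inE; apply/orP; right.
  move: hij; rewrite neq_ltn => /orP[h|h]; first exact: key h hN.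
  by apply: key h _; rewrite Nset_sym.
have hA : forall i : 'I_n, #|Fam k [set i] [set i]| * n ^ k = M.
  move=> i; have := card_Fam n k [set i] [set i].
  by rewrite card_setX1 cards1 !mul1n exp1n mul1n.
have hB : forall (i j : 'I_n) (S : {set 'I_n}), i != j -> #|S| = k.-1 ->
    #|Fam k [set i; j] (i |: (j |: S))| * n ^ (2 * k) <= c * M.
  move=> i j S hij hS; have := card_Fam n k [set i; j] (i |: (j |: S)).
  rewrite card_setX1 cards2 hij /= => ->; rewrite leq_mul2r; apply/orP; right.
  rewrite leq_exp2r; last by lia.
  rewrite cardsU1 (cardsU1 j) hS.
  by case: (i \notin _); case: (j \notin S) => /=; lia.
set e := n ^ (2 * k).
set q := #|[set p : 'I_n * 'I_n | p.1 < p.2]|.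
set C := 'C(n, k.-1).
have h1 : bad_count n k <= #|Abig| + #|Bbig|.
  exact: leq_trans (subset_leq_card hincl) (leq_card_setU _ _).1.
have h2 : #|Abig| * e <= n * (n ^ k * M).
  apply: leq_trans (leq_mul (card_bigcup_le _ _ _ _) (leqnn e)) _.
  rewrite big_distrl /= (eq_bigr (fun _ => n ^ k * M)).
    by rewrite sum_nat_const card_ord.
  move=> i _; rewrite -(hA i) mulnCA -expnD addnn -mul2n //.
have h3 : #|Bbig| * e <= q * (C * (c * M)).
  apply: leq_trans (leq_mul (card_bigcup_le _ _ _ _) (leqnn e)) _.
  rewrite big_distrl /= -sum_const_pred; apply: leq_sum => p hp.
  apply: leq_trans (leq_mul (card_bigcup_le _ _ _ _) (leqnn e)) _.
  rewrite big_distrl /= /C -[n in 'C(n, _)]card_ord -card_draws -sum_const_pred.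
  apply: leq_sum => S /eqP hS; apply: hB => //.
  by rewrite neq_ltn hp.
have hq : 2 * q <= n * n by exact: pairs_card.
have hf : C * f <= n ^ k.-1 by rewrite /C /f bin_ffact ffact_le.
have hn0 : 0 < n by lia.
have hpos : 0 < n ^ k.+1 by rewrite expn_gt0 hn0.
rewrite -(leq_pmul2r hpos).
have hba : n ^ k.-1 * n ^ k.+1 = e by rewrite /e -expnD; congr (_ ^ _); lia.
have hnk : n * n ^ k = n ^ k.+1 by rewrite expnS.
have hnnb : n * n * n ^ k.-1 = n ^ k.+1.
  by rewrite -mulnA -expnS prednK; [rewrite expnS | lia].
set a := n ^ k.+1 in hpos hba hnk hnnb *.
set b := n ^ k.-1 in hba hnnb hf *.
set bad := bad_count n k in h1 *.
set A := #|Abig| in h1 h2 *.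
set B := #|Bbig| in h1 h3 *.
have EQ1 : bad * b * (2 * f) * a = bad * (b * a) * (2 * f) by ring.
apply: (@leq_trans ((A * e + B * e) * (2 * f))).
  rewrite EQ1 hba leq_mul2r; apply/orP; right; rewrite -mulnDl leq_mul2r h1 orbT //.
apply: (@leq_trans ((n * (n ^ k * M) + q * (C * (c * M))) * (2 * f))).
  by rewrite leq_mul2r leq_add ?orbT.
rewrite [n * (_ * M)]mulnA hnk.
have EQ2 : (a * M + q * (C * (c * M))) * (2 * f) = 2 * f * a * M + (2 * q) * (C * f) * c * M by ring.
rewrite EQ2.
apply: (@leq_trans (2 * f * a * M + (n * n) * b * c * M)).
  rewrite leq_add2l; apply: leq_mul => //; apply: leq_mul => //; exact: leq_mul.
rewrite hnnb; apply: eq_leq; ring.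
Qed.

Local Open Scope ring_scope.

Theorem mainTheorem3 (k : nat) (hk : (2 <= k)%N) :
  exists N : nat, forall n : nat, (N <= n)%N ->
    (bad_count n k)%:R / (n ^ (n * k))%:R
      <= (1 + ((k.+1) ^ (2 * k))%:R / (2 * (k.-1)`!)%:R) / (n ^ k.-1)%:R :> rat.
Proof.
exists k.+1 => n hn.
have hn0 : (0 < n)%N by lia.
have hM : (0 < n ^ (n * k))%N by rewrite expn_gt0 hn0.
have hb : (0 < n ^ k.-1)%N by rewrite expn_gt0 hn0.
have hf : (0 < 2 * (k.-1)`!)%N by rewrite muln_gt0 fact_gt0.
rewrite ler_pdivrMr ?ltr0n //.
have -> : (1 + ((k.+1) ^ (2 * k))%:R / (2 * (k.-1)`!)%:R) / (n ^ k.-1)%:R * (n ^ (n * k))%:R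
   = ((2 * (k.-1)`! + (k.+1) ^ (2 * k)) * n ^ (n * k))%:R / ((n ^ k.-1) * (2 * (k.-1)`!))%:R :> rat.
  rewrite !natrM natrD; field.
  by rewrite !pnatr_eq0 -!lt0n fact_gt0 hb.
rewrite ler_pdivlMr; last by rewrite ltr0n muln_gt0 hb hf.
rewrite -natrM ler_nat mulnA.
exact: main_nat.
Qed.
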